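(* Let $G$ be any graph with maximum degree $\Delta$. For any $\gamma > 1$, not necessarily constant, \[ \Upsilon_2(\mathbf{P}) \leq \Psi_2(\mathbf{P}) \leq \sqrt{ \frac{\gamma \Delta}{2-2/\gamma} }. \] Moreover, for any $\gamma > 0$, $\Psi_2(\mathbf{P}) \geq \sqrt{\Delta}$ and $\Upsilon_2(\mathbf{P}) \geq \sqrt{ \frac{1 + \Delta}{2} }$.
   Context: $G=(V,E)$ has $n$ nodes; $N(u)$ is the neighborhood of $u$ and $\deg(u)=|N(u)|$. The diffusion matrix $\mathbf{P}=\mathbf{P}(\gamma)$ has $\mathbf{P}_{u,v}=\frac{1}{\gamma\Delta}$ for $\{u,v\}\in E$, $\mathbf{P}_{u,u}=1-\frac{\deg(u)}{\gamma\Delta}$, and $0$ otherwise; $\mathbf{P}^t$ is its $t$-th power ($\mathbf{P}^0$ the identity). $[u:v]\in E$ denotes an edge $\{u,v\}$ with $u<v$. The local and refined local $p$-divergences are $\Psi_p(\mathbf{P})=\max_{w\in V} \big( \sum_{t=0}^{\infty}\sum_{[u:v]\in E} |\mathbf{P}^{t}_{w,u}-\mathbf{P}^{t}_{w,v} |^p \big)^{1/p}$ and $\Upsilon_p(\mathbf{P})=\max_{w\in V} \big( \frac{1}{2} \sum_{t=0}^{\infty} \sum_{u\in V} \max_{v \in N(u)} |\mathbf{P}^{t}_{w,u}-\mathbf{P}^{t}_{w,v} |^p \big)^{1/p}$. *)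

(* Defs.v *)
From HB Require Import structures.
From mathcomp Require Import all_boot all_order all_algebra.
From mathcomp Require Import all_classical all_reals all_analysis.
Set Implicit Arguments. Unset Strict Implicit. Unset Printing Implicit Defensive.
Import Order.TTheory GRing.Theory Num.Theory.
Local Open Scope ring_scope.

(* A graph on the vertex set 'I_n (nodes 0..n-1) is given by an adjacency
   relation e, required (in the theorem) to be symmetric and irreflexive. *)

Definition deg (n : nat) (e : rel 'I_n) (u : 'I_n) : nat := #|[set v | e u v]|.

Definition maxdeg (n : nat) (e : rel 'I_n) : nat := (\max_(u : 'I_n) deg e u)%N.

Definition Pmat (R : realType) (n : nat) (e : rel 'I_n) (gamma : R) : 'M[R]_n :=
  \matrix_(u, v)
    (if u == v then 1 - (deg e u)%:R / (gamma * (maxdeg e)%:R)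
     else if e u v then 1 / (gamma * (maxdeg e)%:R) else 0).

Definition Psi (R : realType) (n : nat) (e : rel 'I_n) (P : 'M[R]_n) (p : R)
  : \bar R :=
  \big[maxe/-oo%E]_(w : 'I_n)
    poweR (\sum_(0 <= t <oo)
             ((\sum_(u : 'I_n) \sum_(v : 'I_n | (u < v)%N && e u v)
                 `|(P ^+ t) w u - (P ^+ t) w v| `^ p)%:E))%E p^-1.

(* Refined local p-divergence Upsilon_p(P):
   max_w ( 1/2 sum_{t>=0} sum_{u in V} max_{v in N(u)} |P^t_{w,u}-P^t_{w,v}|^p )^(1/p).
   The inner max over an empty neighbourhood is taken to be 0. *)
Definition Upsilon (R : realType) (n : nat) (e : rel 'I_n) (P : 'M[R]_n) (p : R)
  : \bar R :=
  \big[maxe/-oo%E]_(w : 'I_n)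
    poweR ((2^-1)%:E *
           \sum_(0 <= t <oo)
             ((\sum_(u : 'I_n) \big[Num.max/0]_(v : 'I_n | e u v)
                 `|(P ^+ t) w u - (P ^+ t) w v| `^ p)%:E))%E p^-1.

(* Main.v *)
Require Import Defs.
From HB Require Import structures.
From mathcomp Require Import all_boot all_order all_algebra.
From mathcomp Require Import all_classical all_reals all_analysis.
From mathcomp Require Import ring lra.
Import Order.TTheory GRing.Theory Num.Theory.
Local Open Scope ring_scope.

Lemma series_le_bound (R : realType) (u : nat -> R) (c : R) :
  (forall t, 0 <= u t) -> (forall T, \sum_(0 <= t < T) u t <= c) ->
  (\sum_(0 <= t <oo) (u t)%:E <= c%:E)%E.
Proof.
move=> u0 uc.
apply: lime_le.
  by apply: is_cvg_nneseries => k _ _; rewrite lee_fin.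
by apply: nearW => T; rewrite sumEFin lee_fin.
Qed.

Section G.

Variables (R : realType) (n : nat) (e : rel 'I_n).
Hypotheses (e_sym : symmetric e) (e_irr : irreflexive e).

Lemma swap_sum (F : 'I_n -> 'I_n -> R) :
  \sum_u \sum_(v | e u v) F u v = \sum_u \sum_(v | e u v) F v u.
Proof.
rewrite (eq_bigr (fun u => \sum_v (if e u v then F u v else 0))); last first.
  by move=> u _; rewrite big_mkcond.
rewrite exchange_big /=; apply: eq_bigr => u _.
rewrite [RHS]big_mkcond; apply: eq_bigr => v _.
by rewrite e_sym.
Qed.

Lemma sym_half (F : 'I_n -> 'I_n -> R) : (forall u v : 'I_n, F u v = F v u) ->
  \sum_(u : 'I_n) \sum_(v : 'I_n | e u v) F u v = 2 * \sum_(u : 'I_n) \sum_(v : 'I_n | (u < v)%N && e u v) F u v.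
Proof.
move=> Fs.
have H : forall u : 'I_n, \sum_(v : 'I_n | e u v) F u v =
   \sum_(v : 'I_n | (u < v)%N && e u v) F u v + \sum_(v : 'I_n | (v < u)%N && e u v) F u v.
  move=> u; rewrite (bigID (fun v : 'I_n => (u < v)%N)) /=; congr (_ + _).
    by apply: eq_bigl => v; rewrite andbC.
  apply: eq_bigl => v; rewrite andbC; case euv: (e u v); rewrite ?andbT ?andbF //.
  rewrite -leqNgt leq_eqVlt; case: eqP => //= vu.
  by have := e_irr u; rewrite -{2}(val_inj vu) euv.
rewrite (eq_bigr _ (fun u (_ : true) => H u)) big_split /= mulr2n mulrDl mul1r; congr (_ + _).
rewrite (eq_bigr (fun u : 'I_n => \sum_(v : 'I_n) (if (v < u)%N && e u v then F u v else 0))); last first.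
  by move=> u _; rewrite big_mkcond.
rewrite exchange_big /=; apply: eq_bigr => u _.
rewrite [RHS]big_mkcond; apply: eq_bigr => v _.
by rewrite e_sym Fs.
Qed.

Lemma degE (u : 'I_n) : (deg e u)%:R = \sum_(v : 'I_n | e u v) (1 : R).
Proof. by rewrite /deg -sumr_const; apply: eq_bigl => v; rewrite inE. Qed.

Lemma deg_le (u : 'I_n) : (deg e u <= maxdeg e)%N.
Proof. by rewrite /maxdeg; exact: (leq_bigmax (F := fun u => deg e u)). Qed.

Definition Lap (x : 'I_n -> R) (u : 'I_n) := \sum_(v : 'I_n | e u v) (x u - x v).
Definition Esum (x : 'I_n -> R) :=
  \sum_(u : 'I_n) \sum_(v : 'I_n | (u < v)%N && e u v) (x u - x v) ^+ 2.
Definition Nsq (x : 'I_n -> R) := \sum_(u : 'I_n) x u ^+ 2.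

Lemma xLap x : \sum_u x u * Lap x u = Esum x.
Proof.
have h : 2 * \sum_u x u * Lap x u = 2 * Esum x.
  rewrite /Esum -sym_half; last by move=> u v; rewrite -sqrrN opprB.
  rewrite mulr2n mulrDl mul1r {2}/Lap.
  rewrite (eq_bigr (fun u => \sum_(v | e u v) x u * (x u - x v))); last first.
    by move=> u _; rewrite /Lap mulr_sumr.
  rewrite [X in X + _ = _]swap_sum -big_split /=; apply: eq_bigr => u _.
  rewrite -big_split /=; apply: eq_bigr => v _; rewrite /Lap; ring.
by move: h => /(congr1 (fun z => z / 2)); rewrite !(mulrC 2) !mulfK // pnatr_eq0.
Qed.

Lemma CS {I : finType} (P : pred I) (a : I -> R) :
  (\sum_(i | P i) a i) ^+ 2 <= #|P|%:R * \sum_(i | P i) a i ^+ 2.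
Proof.
set S1 := \sum_(i | P i) a i; set S2 := \sum_(i | P i) a i ^+ 2.
have k1 : \sum_(i | P i) (1 : R) = #|P|%:R.
  by rewrite sumr_const; apply: congr1; apply: eq_card.
have h : 0 <= \sum_(i | P i) \sum_(j | P j) (a i - a j) ^+ 2.
  by apply: sumr_ge0 => i _; apply: sumr_ge0 => j _; exact: sqr_ge0.
have e2 : forall i, \sum_(j | P j) (a i - a j) ^+ 2 =
    a i ^+ 2 * #|P|%:R - 2 * a i * S1 + S2.
  move=> i; rewrite -k1 /S1 /S2 mulr_sumr mulr_sumr -sumrB -big_split /=.
  by apply: eq_bigr => j _; ring.
rewrite (eq_bigr _ (fun i (_ : P i) => e2 i)) in h.
rewrite big_split sumrB /= -!mulr_suml -/S2 in h.
rewrite -mulr_sumr -/S1 sumr_const in h.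
have -> : S1 ^+ 2 = S1 * S1 by ring.
have hk : S2 *+ #|[pred i | P i]| = #|P|%:R * S2.
  by rewrite -mulr_natl; congr (_ * _); congr (_ %:R); apply: eq_card.
rewrite hk in h; lra.
Qed.

Lemma cardE_sum (I : finType) (P : pred I) : #|P|%:R = \sum_(i | P i) (1 : R).
Proof. by rewrite sumr_const; apply: congr1; apply: eq_card. Qed.

Lemma Lsq x : \sum_u Lap x u ^+ 2 <= (maxdeg e)%:R * (2 * Esum x).
Proof.
rewrite /Esum -sym_half; last by move=> u v; rewrite -sqrrN opprB.
rewrite mulr_sumr; apply: ler_sum => u _.
rewrite /Lap; apply: (le_trans (CS (e u) (fun v => x u - x v))).
apply: ler_wpM2r; first by apply: sumr_ge0 => v _; exact: sqr_ge0.
by rewrite cardE_sum -degE ler_nat deg_le.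
Qed.

Lemma step x (gamma : R) : 1 < gamma -> (0 < maxdeg e)%N ->
  Esum x <= gamma * (maxdeg e)%:R / (2 - 2 / gamma) *
    (Nsq x - Nsq (fun u => x u - Lap x u / (gamma * (maxdeg e)%:R))).
Proof.
move=> g1 D0.
set D := ((maxdeg e)%:R : R). set c := gamma * D.
have Dp : 0 < D by rewrite ltr0n.
have gp : 0 < gamma by lra.
have cp : 0 < c by rewrite mulr_gt0.
have En : 0 <= Esum x.
  by apply: sumr_ge0 => u _; apply: sumr_ge0 => v _; exact: sqr_ge0.
have ex : Nsq (fun u => x u - Lap x u / c) =
   Nsq x - 2 / c * \sum_u x u * Lap x u + (\sum_u Lap x u ^+ 2) / c ^+ 2.
  rewrite /Nsq mulr_sumr mulr_suml -sumrB -big_split /=; apply: eq_bigr => u _.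
  by field; rewrite gt_eqF.
have hL := Lsq x.
rewrite xLap in ex.
have d2 : 0 < 2 - 2 / gamma.
  have : gamma^-1 < 1 by rewrite invf_lt1. lra.
have Kp : 0 <= gamma * D / (2 - 2 / gamma).
  by apply: divr_ge0; [apply: mulr_ge0|]; lra.
have Hk : gamma * D / (2 - 2 / gamma) * (2 / c * Esum x - D * (2 * Esum x) / c ^+ 2)
   = Esum x.
  rewrite /c; field; apply/andP; split; try apply/andP; try split;
   rewrite ?gt_eqF //; lra.
rewrite -{1}Hk; apply: ler_wpM2l => //.
rewrite ex.
have : (\sum_u Lap x u ^+ 2) / c ^+ 2 <= D * (2 * Esum x) / c ^+ 2.
  by apply: ler_wpM2r => //; rewrite invr_ge0 sqr_ge0.
lra.
Qed.

Lemma Prec (gamma : R) t (w u : 'I_n) :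
  (Pmat e gamma ^+ t.+1) w u = (Pmat e gamma ^+ t) w u -
     Lap (fun v => (Pmat e gamma ^+ t) w v) u / (gamma * (maxdeg e)%:R).
Proof.
rewrite exprSr mxE.
set x := fun v => (Pmat e gamma ^+ t) w v.
set c := gamma * (maxdeg e)%:R.
rewrite -/(x u) (bigD1 u) //= mxE eqxx -/c.
have -> : \sum_(k < n | k != u) (Pmat e gamma ^+ t) w k * Pmat e gamma k u =
    \sum_(k | e u k) x k / c.
  rewrite big_mkcond [RHS]big_mkcond; apply: eq_bigr => k _.
  rewrite mxE -/c /x; case: (eqVneq k u) => [->|kn]; first by rewrite e_irr.
  by rewrite /= e_sym; case: (e u k) => //; rewrite ?mulr0 ?mul1r.  
have hL : Lap x u = x u * (deg e u)%:R - \sum_(k | e u k) x k.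
  by rewrite /Lap sumrB degE mulr_sumr; congr (_ - _); apply: eq_bigr => k _; rewrite mulr1.
rewrite hL -mulr_suml /x; ring.
Qed.

Lemma row0 (gamma : R) (w u : 'I_n) : (Pmat e gamma ^+ 0) w u = (w == u)%:R.
Proof. by rewrite expr0 mxE. Qed.

Lemma Esum_row0 (w : 'I_n) : Esum (fun v => (w == v)%:R) = (deg e w)%:R.
Proof.
rewrite -xLap (bigD1 w) //= eqxx mul1r big1 ?addr0; last first.
  by move=> u; rewrite eq_sym => /negbTE ->; rewrite mul0r.
rewrite /Lap degE; apply: eq_bigr => v ewv.
have wv : w != v by apply/eqP => wv; move: ewv; rewrite -wv e_irr.
by rewrite eqxx (negbTE wv) subr0.
Qed.

Lemma Nsq_row0 (w : 'I_n) : Nsq (fun v => (w == v)%:R) = 1.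
Proof.
rewrite /Nsq (bigD1 w) //= eqxx expr1n big1 ?addr0 //.
by move=> u; rewrite eq_sym => /negbTE ->; rewrite expr0n.
Qed.

Lemma Nsq_ge0 x : 0 <= Nsq x.
Proof. by apply: sumr_ge0 => u _; exact: sqr_ge0. Qed.

Lemma Esum_ge0 x : 0 <= Esum x.
Proof. by apply: sumr_ge0 => u _; apply: sumr_ge0 => v _; exact: sqr_ge0. Qed.

Lemma pow2E (d : R) : `|d| `^ 2 = d ^+ 2.
Proof. by rewrite (powR_mulrn 2) ?normr_ge0 // real_normK // num_real. Qed.

Lemma termE (P : 'M[R]_n) t (w : 'I_n) :
  \sum_(u : 'I_n) \sum_(v : 'I_n | (u < v)%N && e u v)
      `|(P ^+ t) w u - (P ^+ t) w v| `^ 2 = Esum (fun v => (P ^+ t) w v).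
Proof. by apply: eq_bigr => u _; apply: eq_bigr => v _; rewrite pow2E. Qed.

Lemma tele (gamma : R) (w : 'I_n) : 1 < gamma -> (0 < maxdeg e)%N ->
  forall T, \sum_(0 <= t < T) Esum (fun v => (Pmat e gamma ^+ t) w v) <=
   gamma * (maxdeg e)%:R / (2 - 2 / gamma) *
     (1 - Nsq (fun v => (Pmat e gamma ^+ T) w v)).
Proof.
move=> g1 D0; elim=> [|T IH].
  have -> : Nsq (fun v => (Pmat e gamma ^+ 0) w v) = 1.
    by rewrite -(Nsq_row0 w); apply: eq_bigr => u _; rewrite row0.
  by rewrite big_nil subrr mulr0.
rewrite big_nat_recr //=.
have hs := step (fun v => (Pmat e gamma ^+ T) w v) gamma g1 D0.
have -> : Nsq (fun v => (Pmat e gamma ^+ T.+1) w v) =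
  Nsq (fun u => (Pmat e gamma ^+ T) w u -
     Lap (fun v => (Pmat e gamma ^+ T) w v) u / (gamma * (maxdeg e)%:R)).
  by apply: eq_bigr => u _; rewrite Prec.
move: IH hs; set K := gamma * _ / _; rewrite mulrBr => IH hs.
rewrite mulrBr; lra.
Qed.
End G.

Theorem theorem5p3 (R : realType) (n : nat) (e : rel 'I_n)
  (e_sym : symmetric e) (e_irr : irreflexive e)
  (Delta_pos : (0 < maxdeg e)%N) :
  (forall gamma : R, 1 < gamma ->
     (Upsilon e (Pmat e gamma) 2 <= Psi e (Pmat e gamma) 2)%E /\
     (Psi e (Pmat e gamma) 2 <=
        (Num.sqrt (gamma * (maxdeg e)%:R / (2 - 2 / gamma)))%:E)%E) /\
  (forall gamma : R, 0 < gamma ->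
     ((Num.sqrt (maxdeg e)%:R)%:E <= Psi e (Pmat e gamma) 2)%E /\
     ((Num.sqrt ((1 + (maxdeg e)%:R) / 2))%:E <= Upsilon e (Pmat e gamma) 2)%E).
Proof.
have n0 : (0 < #|'I_n|)%N.
  rewrite card_ord lt0n; apply/eqP => n0.
  suff : maxdeg e = 0%N by move=> h; move: Delta_pos; rewrite h.
  by rewrite /maxdeg big1 // => -[i hi]; exfalso; move: hi; rewrite n0.
have [w0 hw0] := bigop.eq_bigmax (fun u => deg e u) n0.
have Dw0 : maxdeg e = deg e w0 by [].
have h2 : (0 <= 2^-1 :> R) by rewrite invr_ge0.
split.
  move=> gamma g1; split.
    rewrite /Upsilon /Psi; apply: le_bigmax2 => w _.
    have t0 : forall t, (0 <= \sum_(u : 'I_n) \big[Num.max/0]_(v : 'I_n | e u v)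
         `|(Pmat e gamma ^+ t) w u - (Pmat e gamma ^+ t) w v| `^ 2).
      by move=> t; apply: sumr_ge0 => u _; apply: bigmax_ge_id.
    have t1 : forall t, (0 <= \sum_(u : 'I_n) \sum_(v : 'I_n | (u < v)%N && e u v)
         `|(Pmat e gamma ^+ t) w u - (Pmat e gamma ^+ t) w v| `^ 2).
      by move=> t; apply: sumr_ge0 => u _; apply: sumr_ge0 => v _; exact: powR_ge0.
    apply: gt0_ler_poweR => //.
    - rewrite in_itv /= leey andbT; apply: mule_ge0; first by rewrite lee_fin.
      by apply: nneseries_ge0 => k _ _; rewrite lee_fin.
    - rewrite in_itv /= leey andbT.
      by apply: nneseries_ge0 => k _ _; rewrite lee_fin.
    rewrite -nneseriesZl; last by move=> k _; rewrite lee_fin.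
    apply: lee_nneseries.
      by move=> k _ _; rewrite -EFinM lee_fin mulr_ge0.
    move=> t _; rewrite -EFinM lee_fin.
    set d := fun u v => `|(Pmat e gamma ^+ t) w u - (Pmat e gamma ^+ t) w v| `^ 2.
    have hs := @sym_half R n e e_sym e_irr d (fun u v => congr1 (fun z => z `^ 2) (distrC _ _)).
    have hA : \sum_(u : 'I_n) \big[Num.max/0]_(v : 'I_n | e u v) d u v <=
              \sum_(u : 'I_n) \sum_(v : 'I_n | e u v) d u v.
      apply: ler_sum => u _; apply/bigmax_leP; split.
        by apply: sumr_ge0 => v _; exact: powR_ge0.
      move=> v ev; rewrite (bigD1 v) //= lerDl.
      by apply: sumr_ge0 => k _; exact: powR_ge0.
    rewrite /d in hs hA; lra.
  set K := gamma * (maxdeg e)%:R / (2 - 2 / gamma).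
  have K0 : 0 <= K.
    have : gamma^-1 < 1 by rewrite invf_lt1 //; lra.
    move=> gi; apply: divr_ge0; first by apply: mulr_ge0; [lra|rewrite ler0n].
    lra.
  rewrite /Psi; apply/bigmax_leP; split; first by rewrite leNye.
  move=> w _.
  rewrite -powR12_sqrt //.
  have -> : ((K `^ 2^-1)%:E = poweR K%:E 2^-1)%E by [].
  have t1 : forall t, (0 <= \sum_(u : 'I_n) \sum_(v : 'I_n | (u < v)%N && e u v)
       `|(Pmat e gamma ^+ t) w u - (Pmat e gamma ^+ t) w v| `^ 2).
    by move=> t; apply: sumr_ge0 => u _; apply: sumr_ge0 => v _; exact: powR_ge0.
  apply: gt0_ler_poweR => //.
  - rewrite in_itv /= leey andbT.
    by apply: nneseries_ge0 => k _ _; rewrite lee_fin.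
  - by rewrite in_itv /= leey andbT lee_fin.
  apply: series_le_bound => // T.
  under eq_bigr do rewrite termE.
  apply: le_trans (@tele R n e e_sym e_irr gamma w g1 Delta_pos T) _.
  rewrite -/K -[X in _ <= X]mulr1; apply: ler_wpM2l => //.
  have := @Nsq_ge0 R n (fun v => (Pmat e gamma ^+ T) w v); lra.
move=> gamma g0.
have r0 : (fun v => (Pmat e gamma ^+ 0) w0 v) = (fun v => (w0 == v)%:R).
  by apply: funext => v; rewrite row0.
split.
  rewrite /Psi; apply: le_trans (le_bigmax _ _ w0).
  rewrite -powR12_sqrt ?ler0n //.
  have -> : (((maxdeg e)%:R `^ 2^-1)%:E = poweR ((maxdeg e)%:R)%:E 2^-1)%E by [].
  have t1 : forall t, (0 <= \sum_(u : 'I_n) \sum_(v : 'I_n | (u < v)%N && e u v)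
       `|(Pmat e gamma ^+ t) w0 u - (Pmat e gamma ^+ t) w0 v| `^ 2).
    by move=> t; apply: sumr_ge0 => u _; apply: sumr_ge0 => v _; exact: powR_ge0.
  apply: gt0_ler_poweR => //.
  - by rewrite in_itv /= leey andbT lee_fin ler0n.
  - rewrite in_itv /= leey andbT.
    by apply: nneseries_ge0 => k _ _; rewrite lee_fin.
  apply: le_trans (nneseries_lim_ge 1 _); last by move=> k _ _; rewrite lee_fin.
  by rewrite big_nat1 lee_fin termE r0 Esum_row0 // Dw0.
set D := ((maxdeg e)%:R : R).
rewrite /Upsilon; apply: le_trans (le_bigmax _ _ w0).
have hD : 0 <= (1 + D) / 2 by apply: divr_ge0 => //; apply: addr_ge0; rewrite /D ?ler0n.
rewrite -powR12_sqrt //.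
have -> : ((((1 + D) / 2) `^ 2^-1)%:E = poweR ((1 + D) / 2)%:E 2^-1)%E by [].
have t0 : forall t, (0 <= \sum_(u : 'I_n) \big[Num.max/0]_(v : 'I_n | e u v)
     `|(Pmat e gamma ^+ t) w0 u - (Pmat e gamma ^+ t) w0 v| `^ 2).
  by move=> t; apply: sumr_ge0 => u _; apply: bigmax_ge_id.
apply: gt0_ler_poweR => //.
- by rewrite in_itv /= leey andbT lee_fin.
- rewrite in_itv /= leey andbT; apply: mule_ge0; first by rewrite lee_fin.
  by apply: nneseries_ge0 => k _ _; rewrite lee_fin.
rewrite mulrC EFinM lee_pmul2l //.
apply: le_trans (nneseries_lim_ge 1 _); last by move=> k _ _; rewrite lee_fin.
rewrite big_nat1 lee_fin.
under eq_bigr => u _ do under eq_bigr => v _ do rewrite !row0.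
set M := fun u : 'I_n => \big[Num.max/0]_(v | e u v)
   `|(w0 == u)%:R - (w0 == v)%:R| `^ 2 : R.
rewrite -/(\sum_(u : 'I_n) M u).
have M0 : forall u, 0 <= M u by move=> u; apply: bigmax_ge_id.
have M1 : forall u, (u == w0) || e w0 u -> 1 <= M u.
  move=> u; case: (eqVneq u w0) => [->|uw] /= hu.
    have : (0 < #|[set v | e w0 v]|)%N by rewrite -/(deg e w0) -Dw0.
    case/card_gt0P => v0; rewrite inE => hv0.
    apply: (bigmax_sup v0) => //.
    have wv : w0 != v0 by apply/eqP => wv; move: hv0; rewrite -wv e_irr.
    by rewrite eqxx (negbTE wv) subr0 pow2E expr1n.
  apply: (bigmax_sup w0); first by rewrite e_sym.
  by rewrite eqxx eq_sym (negbTE uw) sub0r pow2E sqrrN expr1n.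
have card : \sum_(u | (u == w0) || e w0 u) (1 : R) = 1 + D.
  rewrite (bigD1 w0) /= ?eqxx //; congr (_ + _).
  rewrite /D Dw0 degE; apply: eq_bigl => u.
  by case: (eqVneq u w0) => [->|uw] /=; rewrite ?e_irr ?andbT ?andbF.
rewrite -card [X in _ <= X](bigID (fun u => (u == w0) || e w0 u)) /= -[X in X <= _]addr0.
apply: lerD; first by apply: ler_sum => u hu; exact: M1.
by apply: sumr_ge0 => u _.
Qed.
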